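(* Let $m\ge1$, $K_1,\dots,K_m>0$, and $f_i(x)=\frac{K_i x}{K_i+x}$. For $\rho\in[0,1)$ let $(\mathbf{u}(\rho),\mu(\rho))$ be the unique steady state of the infinite-population foraging model, i.e. the unique solution with $u_i\ge0$, $\sum_iu_i=1$, $0<\mu<1$ of $$u_i=\Big((1-\rho)+\frac{\rho}{\mu}\Big)f_i(u_i)+\frac{1-\rho}{m}(1-\mu)\ (i=1,\dots,m),\qquad \mu=\sum_{i=1}^m f_i(u_i).$$ Then $$\lim_{\rho\to1}u_i(\rho)=\frac{K_i}{\sum_{j=1}^mK_j}\quad(i=1,\dots,m),\qquad \lim_{\rho\to1}\mu(\rho)=\frac{\sum_{j=1}^mK_j}{1+\sum_{j=1}^mK_j}.$$
   Context: The infinite-population foraging model is the map on the probability simplex in $\mathbb{R}^m$ given by $\mathbf{u}_{n+1}=\mathbf{f}(\mathbf{u}_n)+(1-\langle\mathbf{1},\mathbf{f}(\mathbf{u}_n)\rangle)\big(\frac{\rho}{\langle\mathbf{1},\mathbf{f}(\mathbf{u}_n)\rangle}\mathbf{f}(\mathbf{u}_n)+\frac{1-\rho}{m}\mathbf{1}\big)$, where $\mathbf{f}(\mathbf{u})=(f_1(u_1),\dots,f_m(u_m))^T$ and $\rho\in[0,1]$ is the recruitment probability; $K_i$ is the resource abundance at site $i$. For $\rho<1$ this map has a unique fixed point on the simplex, which is the steady state referred to. At $\rho=1$ the steady states are the points with $u_i=K_i/\sum_{j\in\mathcal I}K_j$ for $i\in\mathcal I$ and $u_i=0$ otherwise, for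 any nonempty $\mathcal I\subset\{1,\dots,m\}$. *)

(* Defs.v *)
From HB Require Import structures.
From mathcomp Require Import all_boot all_order all_algebra.
From mathcomp Require Import all_classical all_reals all_analysis.
Set Implicit Arguments. Unset Strict Implicit. Unset Printing Implicit Defensive.
Import Order.TTheory GRing.Theory Num.Theory.
Local Open Scope ring_scope.

Definition fK (R : realType) (m : nat) (K : 'I_m -> R) (i : 'I_m) (x : R) : R :=
  K i * x / (K i + x).

Definition steady_state (R : realType) (m : nat) (K : 'I_m -> R) (rho : R)
    (v : 'I_m -> R) (mu : R) : Prop :=
  [/\ forall i, 0 <= v i,
      \sum_(i < m) v i = 1,
      0 < mu /\ mu < 1,
      mu = \sum_(i < m) fK K i (v i)
    & forall i, v i = ((1 - rho) + rho / mu) * fK K i (v i)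
                      + (1 - rho) / m%:R * (1 - mu)].

(* Main.v *)
Require Import Defs.
From HB Require Import structures.
From mathcomp Require Import all_boot all_order all_algebra.
From mathcomp Require Import all_classical all_reals all_analysis.
From mathcomp Require Import ring lra.
Import Order.TTheory GRing.Theory Num.Theory.
Import numFieldNormedType.Exports.
Local Open Scope classical_set_scope.
Local Open Scope ring_scope.

Lemma cvg_left1 (R: realType) (g : R -> R) (L C : R) : 0 < C ->
  (forall r, 1/2 < r -> r < 1 -> `|L - g r| <= C * (1 - r)) ->
  g r @[r --> at_left (1:R)] --> L.
Proof.
move=> C0 H; apply/cvgrPdist_le => e e0.
near=> r.
have h : 1 - r < e / C by near: r; apply: nbhs_left_ltBl; rewrite divr_gt0.
apply: le_trans (H r _ _) _.
- near: r; apply: nbhs_left_gt; lra.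
- near: r; exact: nbhs_left_lt.
rewrite -ler_pdivlMl //; rewrite mulrC; exact: ltW.
Unshelve. all: by end_near. Qed.

Lemma key (R : realType) (m : nat) (K : 'I_m -> R) (rho : R) (v : 'I_m -> R) (mu : R) :
  (0 < m)%N -> (forall i, 0 < K i) -> 1/2 < rho -> rho < 1 -> steady_state K rho v mu ->
  (forall i, `|K i / \sum_(j < m) K j - v i| <= (3 * (K i / \sum_(j < m) K j) + 3) * (1 - rho))
  /\ `|(\sum_(j < m) K j) / (1 + \sum_(j < m) K j) - mu| <= 8 * (1 - rho).
Proof.
move=> m0 Kpos r1 r2 [vpos vsum [mu0 mu1] musum E].
set S := \sum_(j < m) K j.
have S0 : 0 < S.
  rewrite /S (bigD1 (Ordinal m0)) //=.
  have := Kpos (Ordinal m0).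
  have : 0 <= \sum_(i < m | i != Ordinal m0) K i by apply: sumr_ge0 => i _; exact: ltW.
  lra.
set mR : R := m%:R.
have mR1 : 1 <= mR by rewrite /mR ler1n.
set t := rho * (1 - mu) / mu.
set c := (1 - rho) / mR.
set b := (1 - rho) / mR * (1 - mu).
have mu0' : mu != 0 by rewrite gt_eqF.
have tmu : t * mu = rho * (1 - mu) by rewrite /t; field.
have t0 : 0 < t by rewrite /t divr_gt0 // mulr_gt0 //; lra.
have c0 : 0 <= c by rewrite /c divr_ge0 //; lra.
have c1 : c <= 1 - rho by rewrite /c ler_pdivrMr; nra.
have cmR : c * mR = 1 - rho by rewrite /c divfK // gt_eqF // (lt_le_trans _ mR1).
have b0 : 0 < b by rewrite /b mulr_gt0 ?divr_gt0 //; lra.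
have bc : b = c * (1 - mu) by [].
have ei : forall i, 0 <= v i - K i * t - b /\ (v i - K i * t - b) * rho <= c.
  move=> i; have eq := E i; rewrite /fK -/b in eq.
  have k0 := Kpos i; have x0 := vpos i.
  set x := v i in eq x0 *; set k := K i in eq k0 *.
  have kx : k + x != 0 by rewrite gt_eqF //; lra.
  have H1 : x * (k + x) = (1 - rho + rho / mu) * (k * x) + b * (k + x).
    have -> : x * (k + x) = ((1 - rho + rho / mu) * (k * x / (k + x)) + b) * (k + x) by rewrite -eq.
    by field; rewrite mu0' kx.
  have H2 : x * (x - k * t - b) = b * k.
    have : x * (x - k * t - b) - b * k = x * (k + x) - ((1 - rho + rho / mu) * (k * x) + b * (k + x)).
      by rewrite /t; field; rewrite ?mu0' ?kx.
    by rewrite H1 subrr => /eqP; rewrite subr_eq0 => /eqP.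
  have bk : 0 < b * k by rewrite mulr_gt0.
  have xp : 0 < x.
    rewrite lt_neqAle x0 andbT; apply/eqP => x0'.
    by move: H2; rewrite -x0' mul0r => h; move: bk; rewrite -h ltxx.
  have ep : 0 < x - k * t - b by rewrite -(pmulr_rgt0 _ xp) H2.
  split; first lra.
  have : (x - k * t - b) * t <= b by nra.
  move=> h; nra.
have sumE : \sum_(i < m) (v i - K i * t - b) = 1 - S * t - (1 - rho) * (1 - mu).
  rewrite !sumrB vsum -(mulr_suml _ _ _ t) sumr_const card_ord -mulr_natl -/mR -/S.
  rewrite bc -cmR; ring.
have P0 : 0 <= \sum_(i < m) (v i - K i * t - b) by apply: sumr_ge0 => i _; case: (ei i).
have P1 : (\sum_(i < m) (v i - K i * t - b)) * rho <= 1 - rho.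
  rewrite mulr_suml -cmR.
  apply: le_trans (ler_sum _ (fun i _ => proj2 (ei i))) _.
  by rewrite sumr_const card_ord -mulr_natr.
rewrite sumE in P0 P1.
have St1 : S * t <= 1 by nra.
have St2 : 1 - 3 * (1 - rho) <= S * t by nra.
split.
  move=> i; have [e0 e1] := ei i.
  have q0 : 0 <= K i / S by rewrite divr_ge0 // ltW.
  have -> : K i / S - v i = K i / S * (1 - S * t) - b - (v i - K i * t - b).
    by field; rewrite gt_eqF.
  rewrite ler_norml; apply/andP; split; nra.
have Hmu : mu * (rho + t) = rho by nra.
set X := S - mu * (1 + S).
have HX : X * (rho + t) = S * t - rho.
  have -> : X * (rho + t) = S * (rho + t) - (1 + S) * (mu * (rho + t)) by rewrite /X; ring.
  rewrite Hmu; ring.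
have X1 : X <= 2 * (1 - rho) by nra.
have X2 : - 4 * (1 - rho) <= X by nra.
set w := 1 / (1 + S).
have w1 : w * (1 + S) = 1 by rewrite /w; field; rewrite gt_eqF //; lra.
have w0 : 0 < w by rewrite /w divr_gt0 //; lra.
have -> : S / (1 + S) - mu = X * w by rewrite /X /w; field; rewrite gt_eqF //; lra.
rewrite ler_norml; apply/andP; split; nra.
Qed.

Theorem mainTheorem2 (R : realType) (m : nat) (K : 'I_m -> R)
    (u : R -> 'I_m -> R) (mu : R -> R) :
  (0 < m)%N ->
  (forall i, 0 < K i) ->
  (forall rho, 0 <= rho -> rho < 1 -> steady_state K rho (u rho) (mu rho)) ->
  (forall i, u rho i @[rho --> at_left (1:R)] --> (K i / \sum_(j < m) K j : R)) /\
  (mu rho @[rho --> at_left (1:R)] -->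
     ((\sum_(j < m) K j) / (1 + \sum_(j < m) K j) : R)).
Proof.
move=> m0 Kpos H.
have S0 : 0 < \sum_(j < m) K j.
  rewrite (bigD1 (Ordinal m0)) //=.
  have := Kpos (Ordinal m0).
  have : 0 <= \sum_(i < m | i != Ordinal m0) K i by apply: sumr_ge0 => i _; exact: ltW.
  lra.
have kk r : 1/2 < r -> r < 1 ->
  (forall i, `|K i / \sum_(j < m) K j - u r i| <= (3 * (K i / \sum_(j < m) K j) + 3) * (1 - r))
  /\ `|(\sum_(j < m) K j) / (1 + \sum_(j < m) K j) - mu r| <= 8 * (1 - r).
  by move=> r1 r2; apply: key => //; apply: H => //; lra.
split.
  move=> i; apply: (@cvg_left1 R (fun r => u r i) _ (3 * (K i / \sum_(j < m) K j) + 3)).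
    have : 0 <= K i / \sum_(j < m) K j by rewrite divr_ge0 // ltW.
    lra.
  by move=> r r1 r2; case: (kk r r1 r2) => h _; exact: h.
apply: (@cvg_left1 R mu _ 8); first lra.
by move=> r r1 r2; case: (kk r r1 r2).
Qed.
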